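(* Let $n\ge2$ and let $U$ be a domain of $\mathbb{R}^n$. For every $v\in C^\infty(U)$, in $U$ we have $$\Big|\,|D^2vDv|^2-\Delta v\,\Delta_\infty v-\tfrac12\big[|D^2v|^2-(\Delta v)^2\big]|Dv|^2\Big|\le\frac{n-2}{2}\Big[|D^2v|^2|Dv|^2-|D^2vDv|^2\Big].$$
   Context: $\Delta v=\operatorname{div}(Dv)$, $\Delta_\infty v=\langle D^2v\,Dv,Dv\rangle$, and $|D^2v|$ is the Frobenius (Hilbert–Schmidt) norm of the Hessian. *)

(* Defs.v *)
From HB Require Import structures.
From mathcomp Require Import all_boot all_order all_algebra.
From mathcomp Require Import all_classical all_reals all_analysis.
Set Implicit Arguments. Unset Strict Implicit. Unset Printing Implicit Defensive.
Import Order.TTheory GRing.Theory Num.Theory.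
Import numFieldNormedType.Exports.
Local Open Scope classical_set_scope.
Local Open Scope ring_scope.

Definition basis_vec (R : realType) (n : nat) (i : 'I_n) : 'rV[R]_n :=
  delta_mx 0 i.

Definition partial (R : realType) (n : nat) (f : 'rV[R]_n -> R) (i : 'I_n)
  : 'rV[R]_n -> R := fun x => 'D_(basis_vec R i) f x.

Fixpoint Ck (R : realType) (n : nat) (U : set 'rV[R]_n) (k : nat)
  (f : 'rV[R]_n -> R) : Prop :=
  match k with
  | 0 => {in U, continuous f}
  | k'.+1 => (forall x, U x -> differentiable f x) /\
             (forall i : 'I_n, Ck U k' (partial f i))
  end.

Definition smooth_on (R : realType) (n : nat) (U : set 'rV[R]_n)
  (f : 'rV[R]_n -> R) : Prop := forall k, Ck U k f.

Definition domain (R : realType) (n : nat) (U : set 'rV[R]_n) : Prop :=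
  open U /\ connected U /\ U !=set0.

Definition Dv (R : realType) (n : nat) (v : 'rV[R]_n -> R) (x : 'rV[R]_n)
  (i : 'I_n) : R := partial v i x.
Definition D2v (R : realType) (n : nat) (v : 'rV[R]_n -> R) (x : 'rV[R]_n)
  (i j : 'I_n) : R := partial (partial v j) i x.

Definition grad_sq (R : realType) (n : nat) v (x : 'rV[R]_n) : R :=
  \sum_i Dv v x i ^+ 2.
Definition lap (R : realType) (n : nat) v (x : 'rV[R]_n) : R :=
  \sum_i D2v v x i i.
Definition inflap (R : realType) (n : nat) v (x : 'rV[R]_n) : R :=
  \sum_i \sum_j D2v v x i j * Dv v x i * Dv v x j.
Definition hessgrad_sq (R : realType) (n : nat) v (x : 'rV[R]_n) : R :=
  \sum_i (\sum_j D2v v x i j * Dv v x j) ^+ 2.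
Definition hess_sq (R : realType) (n : nat) v (x : 'rV[R]_n) : R :=
  \sum_i \sum_j D2v v x i j ^+ 2.

(* Main.v *)
Require Import Defs.
From HB Require Import structures.
From mathcomp Require Import all_boot all_order all_algebra.
From mathcomp Require Import all_classical all_reals all_analysis.
From mathcomp Require Import ring lra.
Set Implicit Arguments. Unset Strict Implicit. Unset Printing Implicit Defensive.
Import Order.TTheory GRing.Theory Num.Theory.
Import numFieldNormedType.Exports.
Local Open Scope classical_set_scope.
Local Open Scope ring_scope.
Section Alg.
Variable R : realFieldType.

Lemma sq_expand (I : finType) (P : pred I) (x y : I -> R) (al be : R) :
  \sum_(i | P i) (al * x i + be * y i) ^+ 2 =
  al ^+ 2 * \sum_(i | P i) x i ^+ 2 + 2 * al * be * \sum_(i | P i) (x i * y i)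
  + be ^+ 2 * \sum_(i | P i) y i ^+ 2.
Proof.
rewrite !mulr_sumr -!big_split /=; apply: eq_bigr => i _; ring.
Qed.

Lemma CS (I : finType) (P : pred I) (x y : I -> R) :
  (\sum_(i | P i) x i * y i) ^+ 2 <=
  (\sum_(i | P i) x i ^+ 2) * (\sum_(i | P i) y i ^+ 2).
Proof.
set A := \sum_(i | P i) x i ^+ 2; set B := \sum_(i | P i) y i ^+ 2.
set C := \sum_(i | P i) x i * y i.
have A0 : 0 <= A by apply: sumr_ge0 => i _; exact: sqr_ge0.
have B0 : 0 <= B by apply: sumr_ge0 => i _; exact: sqr_ge0.
have := sq_expand P y x A (- C).
rewrite -/B -/A.
have -> : \sum_(i | P i) y i * x i = C by apply: eq_bigr => i _; rewrite mulrC.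
move=> E.
have S0 : 0 <= \sum_(i | P i) (A * y i + - C * x i) ^+ 2.
  by apply: sumr_ge0 => i _; exact: sqr_ge0.
rewrite E in S0.
have [Apos|] := ltP 0 A.
  have : 0 <= A * (A * B - C ^+ 2).
    by move: S0; congr (0 <= _); ring.
  by rewrite pmulr_rge0 // subr_ge0.
move=> Ale0; have A00 : A = 0 by apply/eqP; rewrite eq_le Ale0 A0.
have x0 : forall i, P i -> x i = 0.
  move=> i Pi; apply/eqP; rewrite -sqrf_eq0; apply/eqP.
  move/eqP: A00; rewrite psumr_eq0; last by move=> j _; exact: sqr_ge0.
  by move/allP => /(_ i (mem_index_enum i)); rewrite Pi /= => /eqP.
have -> : C = 0 by rewrite /C big1 // => i Pi; rewrite x0 // mul0r.
by rewrite A00 expr0n /= mul0r.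
Qed.

Lemma gap (I : finType) (r p : I -> R) (k : I) :
  \sum_l (r k * p l - r l * p k) ^+ 2 <=
  (\sum_l r l ^+ 2) * (\sum_l p l ^+ 2) - (\sum_l r l * p l) ^+ 2.
Proof.
rewrite (bigD1 k) //= subrr expr0n /= add0r.
rewrite [\sum_l r l ^+ 2](bigD1 k) //= [\sum_l p l ^+ 2](bigD1 k) //=.
rewrite [\sum_l r l * p l](bigD1 k) //=.
have -> : \sum_(l | l != k) (r k * p l - r l * p k) ^+ 2 =
          \sum_(l | l != k) (r k * p l + (- p k) * r l) ^+ 2.
  by apply: eq_bigr => l _; congr (_ ^+ 2); ring.
rewrite sq_expand.
have -> : \sum_(l | l != k) p l * r l = \sum_(l | l != k) r l * p l.
  by apply: eq_bigr => l _; rewrite mulrC.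
have := CS (fun l => l != k) r p.
set A := \sum_(l | l != k) r l ^+ 2; set B := \sum_(l | l != k) p l ^+ 2.
set C := \sum_(l | l != k) r l * p l.
move=> H; rewrite -subr_ge0.
have -> : (r k ^+ 2 + A) * (p k ^+ 2 + B) - (r k * p k + C) ^+ 2 -
  (r k ^+ 2 * B + 2 * r k * - p k * C + (- p k) ^+ 2 * A) = A * B - C ^+ 2 by ring.
by rewrite subr_ge0.
Qed.

Section Main.
Variables (n : nat) (H : 'I_n -> 'I_n -> R) (p : 'I_n -> R).
Hypothesis Hsym : forall i j, H i j = H j i.
Let g := \sum_i p i ^+ 2.
Let L := \sum_i H i i.
Let b := \sum_i \sum_j H i j * p i * p j.
Let a := \sum_i (\sum_j H i j * p j) ^+ 2.
Let F := \sum_i \sum_j H i j ^+ 2.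
Let Ap i l := H i i * p l - H i l * p i.

Lemma S_ge : \sum_i \sum_l Ap i l ^+ 2 <= F * g - a.
Proof.
rewrite /F /a mulr_suml -sumrB; apply: ler_sum => i _; exact: gap.
Qed.

Lemma T_eq : \sum_l (\sum_i Ap i l) ^+ 2 = L ^+ 2 * g - 2 * L * b + a.
Proof.
have -> : \sum_l (\sum_i Ap i l) ^+ 2 =
   \sum_l (L * p l + (-1) * \sum_i H l i * p i) ^+ 2.
  apply: eq_bigr => l _; congr (_ ^+ 2); rewrite /Ap sumrB /L mulr_suml.
  rewrite mulN1r; congr (_ - _); apply: eq_bigr => i _; by rewrite Hsym.
rewrite sq_expand -/g.
have -> : \sum_l p l * (\sum_i H l i * p i) = b.
  apply: eq_bigr => l _; rewrite mulr_sumr; apply: eq_bigr => i _; ring.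
rewrite /a; ring.
Qed.

Lemma T_le : \sum_l (\sum_i Ap i l) ^+ 2 <= (n%:R - 1) * \sum_i \sum_l Ap i l ^+ 2.
Proof.
rewrite exchange_big /= mulr_sumr; apply: ler_sum => l _.
have n0 : (0 < n)%N := leq_ltn_trans (leq0n _) (ltn_ord l).
rewrite (bigD1 l) //= {1}/Ap subrr add0r.
have := CS (fun i => i != l) (fun i => Ap i l) (fun _ => 1).
have -> : \sum_(i | i != l) Ap i l * 1 = \sum_(i | i != l) Ap i l.
  by apply: eq_bigr => i _; rewrite mulr1.
have -> : \sum_(i | i != l) (1 : R) ^+ 2 = n%:R - 1.
  rewrite expr1n sumr_const.
  have -> : #|[pred i : 'I_n | i != l]| = n.-1.
    by rewrite -[in RHS](card_ord n); apply: cardC1.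
  by rewrite -subn1 natrB.
move=> hle; apply: (le_trans hle); rewrite mulrC ler_wpM2l //.
  by rewrite subr_ge0 ler1n.
rewrite [leRHS](bigD1 l) //=; set z := Ap l l; have -> : z = 0 by rewrite /z /Ap subrr.
by rewrite expr0n /= add0r.
Qed.

Lemma final_ineq (N S T X : R) : 2 <= N -> T <= (N - 1) * S -> 0 <= S -> 0 <= T ->
  (N < 3 -> S <= T) -> X = (T - S) / 2 -> `|X| <= (N - 2) / 2 * S.
Proof.
move=> N2 TS S0 T0 n3 ->; rewrite ler_norml; apply/andP; split.
  have [N3|N3] := ltP N 3.
    have := n3 N3 => ST.
    have : 0 <= (N - 2) * S by apply: mulr_ge0 => //; lra.
    lra.
  have : 0 <= (N - 3) * S by apply: mulr_ge0 => //; lra.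
  lra.
lra.
Qed.

Lemma alg_main : (2 <= n)%N -> ((n < 3)%N -> F * g - a <= L ^+ 2 * g - 2 * L * b + a) ->
  `|a - L * b - 2^-1 * (F - L ^+ 2) * g| <= (n%:R - 2) / 2 * (F * g - a).
Proof.
move=> n2 n3; apply: (final_ineq (T := L ^+ 2 * g - 2 * L * b + a)).
- by rewrite ler_nat.
- rewrite -T_eq; apply: (le_trans (T_le)); rewrite ler_wpM2l ?S_ge //.
  by rewrite subr_ge0 ler1n; apply: leq_trans n2.
- exact: le_trans (sumr_ge0 _ (fun i _ => sumr_ge0 _ (fun l _ => sqr_ge0 _))) S_ge.
- by rewrite -T_eq; apply: sumr_ge0 => l _; exact: sqr_ge0.
- by move=> h; apply: n3; rewrite -(ltr_nat R).
- rewrite /Ap; field.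
  done.
Qed.
End Main.

Lemma alg2 (H : 'I_2 -> 'I_2 -> R) (p : 'I_2 -> R) : (forall i j, H i j = H j i) ->
  let g := \sum_i p i ^+ 2 in
  let L := \sum_i H i i in
  let b := \sum_i \sum_j H i j * p i * p j in
  let a := \sum_i (\sum_j H i j * p j) ^+ 2 in
  let F := \sum_i \sum_j H i j ^+ 2 in
  F * g - a <= L ^+ 2 * g - 2 * L * b + a.
Proof.
move=> Hs /=; rewrite !big_ord_recl !big_ord0 /=.
rewrite (Hs (lift ord0 ord0) ord0).
rewrite le_eqVlt; apply/orP; left; apply/eqP; ring.
Qed.

Lemma alg_full (n : nat) (H : 'I_n -> 'I_n -> R) (p : 'I_n -> R) :
  (forall i j, H i j = H j i) -> (2 <= n)%N ->
  `|\sum_i (\sum_j H i j * p j) ^+ 2 - (\sum_i H i i) * (\sum_i \sum_j H i j * p i * p j)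
     - 2^-1 * (\sum_i \sum_j H i j ^+ 2 - (\sum_i H i i) ^+ 2) * (\sum_i p i ^+ 2)|
  <= (n%:R - 2) / 2 * ((\sum_i \sum_j H i j ^+ 2) * (\sum_i p i ^+ 2) - \sum_i (\sum_j H i j * p j) ^+ 2).
Proof.
move=> Hs n2; apply: alg_main => // n3.
have e : n = 2%N by apply/eqP; rewrite eqn_leq n2 -ltnS n3.
subst n; exact: (alg2 p Hs).
Qed.
End Alg.

Section S.
Variables (R : realType) (n : nat).

Lemma basis_norm (i : 'I_n) : `|basis_vec R i| <= 1.
Proof.
rewrite [leLHS]/Num.norm /= mx_normrE; apply: bigmax_le => // -[a b] _ /=.
rewrite /basis_vec mxE; case: (_ && _) => /=; by rewrite ?normr1 ?normr0.
Qed.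

Lemma ball_pt (x : 'rV[R]_n) (r s t : R) (i j : 'I_n) : 0 < r ->
  0 <= s <= r / 4 -> 0 <= t <= r / 4 ->
  ball x r (x + s *: basis_vec R i + t *: basis_vec R j).
Proof.
move=> r0 /andP[s0 s1] /andP[t0 t1]; rewrite -ball_normE /=.
have -> : x - (x + s *: basis_vec R i + t *: basis_vec R j) = - (s *: basis_vec R i + t *: basis_vec R j) by rewrite !opprD !addrA subrr sub0r.
rewrite normrN.
apply: (le_lt_trans (ler_normD _ _)).
rewrite !normrZ (ger0_norm s0) (ger0_norm t0).
have := basis_norm i; have := basis_norm j => bj bi.
have : s * `|basis_vec R i| <= s by rewrite ler_piMr.
have : t * `|basis_vec R j| <= t by rewrite ler_piMr.
lra.
Qed.
Lemma dir_derive (f : 'rV[R]_n -> R) (z e : 'rV[R]_n) (t : R) :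
  differentiable f (z + t *: e) ->
  is_derive t 1 (fun s : R => f (z + s *: e)) ('D_e f (z + t *: e)).
Proof.
move=> df; have dv : derivable f (z + t *: e) e := diff_derivable df.
have E : (fun h : R => h^-1 *: (((fun s : R => f (z + s *: e)) \o shift t) (h *: 1) - f (z + t *: e)))
  = (fun h => h^-1 *: ((f \o shift (z + t *: e)) (h *: e) - f (z + t *: e))).
  apply: funext => h /=; congr (_ *: (f _ - _)).
  by rewrite /= [h%:A]mulr1 scalerDl addrCA.
have dg : derivable (fun s : R => f (z + s *: e)) t 1 by rewrite /derivable E.
have -> : 'D_e f (z + t *: e) = 'D_1 (fun s : R => f (z + s *: e)) t by rewrite /derive E.
exact: derivableP.
Qed.

Lemma mvt_gen (phi dphi : R -> R) (h : R) : 0 < h ->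
  (forall s, 0 <= s <= h -> is_derive s 1 phi (dphi s)) ->
  exists2 c, 0 <= c <= h & phi h - phi 0 = dphi c * h.
Proof.
move=> h0 dd.
have cont : {within `[0, h], continuous phi}.
  apply: derivable_within_continuous => s; rewrite in_itv /= => /andP[a b].
  by have [] := dd s ltac:(by rewrite a b).
have [c cin E] := @MVT R phi dphi 0 h h0
  (fun s hs => dd s ltac:(move: hs; rewrite in_itv /= => /andP[a b]; by rewrite !ltW)) cont.
exists c; first by move: cin; rewrite in_itv /= => /andP[a b]; rewrite !ltW.
by rewrite E subr0.
Qed.

Lemma DM (f : 'rV[R]_n -> R) (x u w : 'rV[R]_n) (h : R) : 0 < h ->
  (forall s t, 0 <= s <= h -> 0 <= t <= h ->
     differentiable f (x + s *: u + t *: w) /\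
     differentiable ('D_u f) (x + s *: u + t *: w)) ->
  exists s t, [/\ 0 <= s <= h, 0 <= t <= h &
   f (x + h *: u + h *: w) - f (x + h *: u) - f (x + h *: w) + f x =
   h ^+ 2 * 'D_w ('D_u f) (x + s *: u + t *: w)].
Proof.
move=> h0 dH.
have hh : 0 <= h <= h by apply/andP; split => //; exact: ltW.
have z0 : (0:R) <= 0 <= h by apply/andP; split => //; exact: ltW.
have D1 : forall s, 0 <= s <= h -> is_derive s 1
    (fun s : R => f ((x + h *: w) + s *: u) - f (x + s *: u))
    ('D_u f ((x + h *: w) + s *: u) - 'D_u f (x + s *: u)).
  move=> s hs.
  have d1 : differentiable f ((x + h *: w) + s *: u).
    by rewrite addrAC; case: (dH s h hs hh).
  have d2 : differentiable f (x + s *: u).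
    by have [] := dH s 0 hs z0; rewrite scale0r addr0.
  exact: (is_deriveB (dir_derive d1) (dir_derive d2)).
have [c cin Ec] := mvt_gen h0 D1.
have D2 : forall t, 0 <= t <= h -> is_derive t 1
    (fun t : R => 'D_u f ((x + c *: u) + t *: w))
    ('D_w ('D_u f) ((x + c *: u) + t *: w)).
  by move=> t ht; apply: dir_derive; have [] := dH c t cin ht.
have [d din Ed] := mvt_gen h0 D2.
exists c, d; split => //.
move: Ec Ed; rewrite !scale0r !addr0 => Ec Ed.
rewrite [x + h *: w + h *: u]addrAC [x + h *: w + c *: u]addrAC in Ec.
have -> : f (x + h *: u + h *: w) - f (x + h *: u) - f (x + h *: w) + f x =
  f (x + h *: u + h *: w) - f (x + h *: u) - (f (x + h *: w) - f x) by ring.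
rewrite Ec Ed; ring.
Qed.

Lemma aux1 (A B C D q1 q2 k : R) : k != 0 -> A - B - C + D = k * q1 ->
  A - C - B + D = k * q2 -> q1 = q2.
Proof. move=> k0 e1 e2; apply: (mulfI k0); rewrite -e1 -e2; ring. Qed.

Lemma aux2 (a b c e : R) : `|a - c| < e / 2 -> `|b - c| < e / 2 -> `|a - b| <= e.
Proof.
move=> h1 h2; have -> : a - b = (a - c) - (b - c) by ring.
apply: (le_trans (ler_normB _ _)); lra.
Qed.

Lemma schwarz (U : set 'rV[R]_n) (f : 'rV[R]_n -> R) x i j : open U -> U x ->
  (forall y, U y -> differentiable f y) ->
  (forall k y, U y -> differentiable (partial f k) y) ->
  (forall k l, {in U, continuous (partial (partial f k) l)}) ->
  partial (partial f i) j x = partial (partial f j) i x.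
Proof.
move=> oU Ux df dP cQ.
set Q1 := partial (partial f i) j; set Q2 := partial (partial f j) i.
apply/eqP; rewrite -subr_eq0 -normr_le0; apply/ler_addgt0Pr => e e0; rewrite add0r.
have xU : x \in U by rewrite inE.
have e2 : 0 < e / 2 by rewrite divr_gt0.
have /cvgrPdist_lt /(_ _ e2) n1 := cQ i j x xU.
have /cvgrPdist_lt /(_ _ e2) n2 := cQ j i x xU.
have nU : nbhs x U by exact: open_nbhs_nbhs.
move/nbhs_ballP: n1 => [r1 /= r1p H1].
move/nbhs_ballP: n2 => [r2 /= r2p H2].
move/nbhs_ballP: nU => [r3 /= r3p H3].
set r := Num.min r3 (Num.min r1 r2).
have r0 : 0 < r by rewrite !lt_min r1p r2p r3p.
have Hr : forall y, ball x r y ->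
    [/\ U y, `|Q1 x - Q1 y| < e / 2 & `|Q2 x - Q2 y| < e / 2].
  move=> y By; split; [apply: H3 | apply: H1 | apply: H2]; apply: le_ball By;
    by rewrite /r !ge_min lexx ?orbT.
set h := r / 4.
have h0 : 0 < h by rewrite divr_gt0.
have hyp1 : forall s t, 0 <= s <= h -> 0 <= t <= h ->
     differentiable f (x + s *: basis_vec R i + t *: basis_vec R j) /\
     differentiable (partial f i) (x + s *: basis_vec R i + t *: basis_vec R j).
  move=> s t hs ht. have [Uy _ _] := Hr _ (@ball_pt x r s t i j r0 hs ht).
  by split; [exact: df | exact: dP].
have [s1 [t1 [hs1 ht1 E1]]] := @DM f x (basis_vec R i) (basis_vec R j) h h0 hyp1.
have hyp2 : forall s t, 0 <= s <= h -> 0 <= t <= h ->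
     differentiable f (x + s *: basis_vec R j + t *: basis_vec R i) /\
     differentiable (partial f j) (x + s *: basis_vec R j + t *: basis_vec R i).
  move=> s t hs ht. have [Uy _ _] := Hr _ (@ball_pt x r s t j i r0 hs ht).
  by split; [exact: df | exact: dP].
have [s2 [t2 [hs2 ht2 E2]]] := @DM f x (basis_vec R j) (basis_vec R i) h h0 hyp2.
have [_ B1 _] := Hr _ (@ball_pt x r _ _ i j r0 hs1 ht1).
have [_ _ B2] := Hr _ (@ball_pt x r _ _ j i r0 hs2 ht2).
set y1 := x + s1 *: basis_vec R i + t1 *: basis_vec R j in E1 B1.
set y2 := x + s2 *: basis_vec R j + t2 *: basis_vec R i in E2 B2.
have E1' : f (x + h *: basis_vec R i + h *: basis_vec R j) -
    f (x + h *: basis_vec R i) - f (x + h *: basis_vec R j) + f x = h ^+ 2 * Q1 y1.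
  rewrite /Q1 /partial. exact: E1.
have E2' : f (x + h *: basis_vec R j + h *: basis_vec R i) -
    f (x + h *: basis_vec R j) - f (x + h *: basis_vec R i) + f x = h ^+ 2 * Q2 y2.
  rewrite /Q2 /partial. exact: E2.
rewrite [x + h *: basis_vec R j + h *: basis_vec R i]addrAC in E2'.
have Q12 : Q1 y1 = Q2 y2.
  apply: (aux1 _ E1' E2'); by rewrite expf_neq0 // gt_eqF.
move: B1 B2; rewrite Q12; exact: aux2.
Qed.

Lemma smooth_sym (U : set 'rV[R]_n) (v : 'rV[R]_n -> R) x : open U -> U x ->
  smooth_on U v -> forall i j, D2v v x i j = D2v v x j i.
Proof.
move=> oU Ux sm i j; have [d1 d2] := sm 2%N.
have dP : forall k y, U y -> differentiable (partial v k) y by move=> k; exact: (d2 k).1.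
have cQ : forall k l, {in U, continuous (partial (partial v k) l)} by move=> k l; exact: (d2 k).2 l.
rewrite /D2v; exact: (schwarz j i oU Ux d1 dP cQ).
Qed.
End S.

Theorem lemma2p1 (R : realType) (n : nat) (U : set 'rV[R]_n)
  (v : 'rV[R]_n -> R) :
  (2 <= n)%N -> domain U -> smooth_on U v ->
  forall x, U x ->
  `| hessgrad_sq v x - lap v x * inflap v x
       - 2^-1 * (hess_sq v x - lap v x ^+ 2) * grad_sq v x |
  <= (n%:R - 2) / 2 * (hess_sq v x * grad_sq v x - hessgrad_sq v x).
Proof.
move=> n2 [oU _] sm x Ux.
have sym := smooth_sym oU Ux sm.
rewrite /hessgrad_sq /lap /inflap /hess_sq /grad_sq.
exact: (alg_full (Dv v x) sym n2).
Qed.
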